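(* Let $\Gamma$ be a finite, simple and undirected graph. Then there exists a finite nilpotent group $G$ such that $\Delta_D(G)$ contains $\Gamma$ as an induced subgraph.
   Context: For a finite group $G$, let $M(G)$ denote its Schur multiplier. A Schur cover of $G$ is a group $\tilde{G}$ with a central extension $\{e\}\to M(G)\xrightarrow{\iota}\tilde{G}\xrightarrow{\pi}G\to\{e\}$ such that $\iota(M(G))\subseteq Z(\tilde{G})\cap[\tilde{G},\tilde{G}]$ and $\tilde G$ has maximal order among such extensions. The deep commuting graph $\Delta_D(G)$ is the simple graph with vertex set $G$ in which two distinct vertices are adjacent if and only if their preimages under $\pi$ commute in $\tilde{G}$ (independent of the choice of Schur cover and preimages). *)

(* Defs.v *)
From mathcomp Require Import all_boot all_fingroup all_solvable.
Set Implicit Arguments. Unset Strict Implicit. Unset Printing Implicit Defensive.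
Import GroupScope.

Definition stem_extension (hT gT : finGroupType) (H : {group hT})
    (G : {group gT}) (f : {morphism H >-> gT}) : Prop :=
  f @* H = G /\ 'ker f \subset 'Z(H) :&: H^`(1).

(* A Schur cover of G: a stem extension of maximal order among all stem
   extensions of G (by any finite group). Its kernel is then M(G). *)
Definition schur_cover (hT gT : finGroupType) (H : {group hT})
    (G : {group gT}) (f : {morphism H >-> gT}) : Prop :=
  stem_extension G f /\
  forall (kT : finGroupType) (K : {group kT}) (g : {morphism K >-> gT}),
    stem_extension G g -> #|K| <= #|H|.

Definition deep_adj (gT : finGroupType) (G : {group gT}) (x y : gT) : Prop :=
  [/\ x \in G, y \in G, x != y &
   forall (hT : finGroupType) (H : {group hT}) (f : {morphism H >-> gT}),
     schur_cover G f ->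
     forall a b, a \in H -> b \in H -> f a = x -> f b = y -> commute a b].

(* Main.v *)
Require Import Defs.
From HB Require Import structures.
From mathcomp Require Import all_boot all_algebra all_fingroup all_solvable.
From mathcomp Require Import ring.
Set Implicit Arguments. Unset Strict Implicit. Unset Printing Implicit Defensive.
Import GRing.Theory.

Fixpoint pr (n : nat) : nat :=
  if n is n'.+1 then sval (prime_above (pr n')) else 2.

Lemma pr_prime n : prime (pr n).
Proof. by case: n => [|n] //=; case: prime_above. Qed.

Lemma pr_S n : pr n < pr n.+1.
Proof. by rewrite /=; case: prime_above. Qed.

Lemma pr_lt i j : i < j -> pr i < pr j.
Proof.
elim: j => // j IH; rewrite ltnS leq_eqVlt => /orP[/eqP -> | /IH h].
  exact: pr_S.
exact: ltn_trans h (pr_S j).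
Qed.

Lemma pr_inj : injective pr.
Proof.
move=> i j E; case: (ltngtP i j) => // h.
  by move: (pr_lt h); rewrite E ltnn.
by move: (pr_lt h); rewrite E ltnn.
Qed.

Section NT.
Variables (V : finType) (e : rel V).
Hypothesis e_sym : symmetric e.

Local Notation I := (option (V * V)).
Definition q (i : I) := pr (enum_rank i).
Lemma q_prime i : prime (q i). Proof. exact: pr_prime. Qed.
Lemma q_inj : injective q.
Proof. by move=> i j /pr_inj /ord_inj /enum_rank_inj. Qed.

Lemma cop_prod (s : seq I) (P : pred I) k :
  (forall j, j \in s -> P j -> j != k) -> coprime (q k) (\prod_(j <- s | P j) q j).
Proof.
move=> H; rewrite big_seq_cond.
apply: (big_ind (fun n => coprime (q k) n)); first exact: coprimen1.
  by move=> x y cx cy; rewrite coprimeMr cx cy.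
move=> j /andP[js Pj]; rewrite prime_coprime ?q_prime // dvdn_prime2 ?q_prime //.
by apply: contra (H j js Pj) => /eqP /q_inj ->.
Qed.

Lemma dvd_prod (P : pred I) k : (q k %| \prod_(i <- enum {: I} | P i) q i) = P k.
Proof.
case Pk: (P k).
  rewrite big_mkcond (bigD1_seq k) ?mem_enum ?enum_uniq //= Pk.
  exact: dvdn_mulr.
apply/negbTE; rewrite -prime_coprime ?q_prime //; apply: cop_prod => j _ Pj.
by apply: contraTneq Pj => ->; rewrite Pk.
Qed.

Lemma mod_prod (s : seq I) x y : uniq s ->
  (x == y %[mod \prod_(i <- s) q i]) = all (fun i => x == y %[mod q i]) s.
Proof.
elim: s => [|i s IH] /=; first by rewrite big_nil !modn1 eqxx.
case/andP=> nis us; rewrite big_cons chinese_remainder ?IH //.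
apply: cop_prod => j js _; apply: contraNneq nis => <-; exact: js.
Qed.

Definition nA (w : V) (i : I) : bool :=
  if i is Some (u, v) then (w == u) && ((u == v) || ~~ e u v) else false.
Definition nB (w : V) (i : I) : bool :=
  if i is Some (u, v) then [&& w == v, u != v & ~~ e u v] else false.
Definition va w := \prod_(i <- enum {: I} | ~~ nA w i) q i.
Definition vb w := \prod_(i <- enum {: I} | ~~ nB w i) q i.
Definition MM := \prod_(i <- enum {: I}) q i.

Lemma MM_gt1 : 1 < MM.
Proof.
rewrite /MM (bigD1_seq None) ?mem_enum ?enum_uniq //=.
have := prime_gt1 (q_prime None).
have : 0 < \prod_(i <- enum {: I} | i != None) q i.
  by apply: (big_ind (fun n => 0 < n)) => // [x y|j _]; [rewrite muln_gt0 => -> | exact: prime_gt0 (q_prime j)].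
by case: (\prod_(_ <- _ | _) _) => // n _ h; rewrite mulnS; apply: leq_trans h (leq_addr _ _).
Qed.

Lemma mod_q x y k : x != y ->
  (va x * vb y == va y * vb x %[mod q k]) = ~~ (nA x k && nB y k) && ~~ (nA y k && nB x k).
Proof.
move=> nxy.
have hor : ~~ (nA x k && nB y k) || ~~ (nA y k && nB x k).
  case: k => [[u v]|] //=; rewrite -negb_and; apply/negP => /andP[/andP[/andP[/eqP xu _] _] /andP[/andP[/eqP yu _] _]].
  by move: nxy; rewrite xu yu eqxx.
have E1 : (va x * vb y %% q k == 0) = ~~ (nA x k && nB y k).
  by rewrite -/(dvdn _ _) Euclid_dvdM ?q_prime // !dvd_prod negb_and.
have E2 : (va y * vb x %% q k == 0) = ~~ (nA y k && nB x k).
  by rewrite -/(dvdn _ _) Euclid_dvdM ?q_prime // !dvd_prod negb_and.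
move: hor; rewrite -E1 -E2.
case: eqP => [->|h1]; case: eqP => [->|h2] //= _.
  by apply/negbTE; rewrite eq_sym; apply/eqP.
by apply/negbTE; apply/eqP.
Qed.

Lemma nHe x y : x != y -> (va x * vb y == va y * vb x %[mod MM]) = e x y.
Proof.
move=> nxy; rewrite /MM mod_prod ?enum_uniq //.
apply/allP/idP => [H | exy k _].
  apply/negPn/negP => nexy.
  have := H (Some (x, y)); rewrite mem_enum mod_q // => /(_ isT).
  by rewrite /= !eqxx nxy nexy orbT.
rewrite mod_q //; case: k => [[u v]|] //=.
apply/andP; split; apply/negP.
  by case/andP=> /andP[/eqP xu _] /and3P[/eqP yv _ ne]; rewrite -xu -yv exy in ne.
by case/andP=> /andP[/eqP yu _] /and3P[/eqP xv _ ne]; rewrite -xv -yu e_sym exy in ne.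
Qed.

Lemma nHi x y : va x = va y %[mod MM] -> x = y.
Proof.
move=> /eqP; rewrite /MM mod_prod ?enum_uniq // => /allP /(_ (Some (x, x))).
rewrite mem_enum => /(_ isT).
have h1 : (va x %% q (Some (x, x)) == 0) = false.
  by rewrite -/(dvdn _ _) dvd_prod /= !eqxx.
have h2 : (va y %% q (Some (x, x)) == 0) = (y != x).
  by rewrite -/(dvdn _ _) dvd_prod /= eqxx andbT.
case: (eqVneq y x) h2 => [-> //|_ /eqP ->].
by move: h1; case: (va x %% _) => // n _; rewrite eq_sym.
Qed.

End NT.

Section Heis.
Variable m : nat.
Local Notation R := 'Z_(m.+2).
Definition heis := (R * R * R)%type.
HB.instance Definition _ := Finite.on heis.
Local Open Scope ring_scope.
Definition hmul (x y : heis) : heis :=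
  (x.1.1 + y.1.1, x.1.2 + y.1.2, x.2 + y.2 + x.1.1 * y.1.2).
Definition hone : heis := (0, 0, 0).
Definition hinv (x : heis) : heis := (- x.1.1, - x.1.2, - x.2 + x.1.1 * x.1.2).
Lemma hmulA : associative hmul.
Proof. by move=> [[a b] c] [[a' b'] c'] [[a'' b''] c'']; rewrite /hmul /=; congr (_, _, _); ring. Qed.
Lemma hmul1 : left_id hone hmul.
Proof. by move=> [[a b] c]; rewrite /hmul /=; congr (_, _, _); ring. Qed.
Lemma hmulV : left_inverse hone hinv hmul.
Proof. by move=> [[a b] c]; rewrite /hmul /=; congr (_, _, _); ring. Qed.
HB.instance Definition _ := Finite_isGroup.Build heis hmulA hmul1 hmulV.

Definition hv (a b c : R) : heis := (a, b, c).

Lemma hvM a b c a' b' c' :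
  (hv a b c * hv a' b' c')%g = hv (a + a') (b + b') (c + c' + a * b').
Proof. by []. Qed.
Lemma hvV a b c : ((hv a b c)^-1)%g = hv (- a) (- b) (- c + a * b).
Proof. by []. Qed.
Lemma hv1 : (1%g : heis) = hv 0 0 0.
Proof. by []. Qed.
Lemma hv_eta (h : heis) : h = hv h.1.1 h.1.2 h.2.
Proof. by case: h => [[]]. Qed.
Lemma hv_inj a b c a' b' c' : hv a b c = hv a' b' c' -> [/\ a = a', b = b' & c = c'].
Proof. by case=> -> -> ->. Qed.

Lemma hv_comm a b c a' b' c' :
  commute (hv a b c) (hv a' b' c') <-> a * b' = a' * b.
Proof.
rewrite /commute !hvM; split.
  by case/hv_inj=> _ _; rewrite (addrC c' c); apply: addrI.
by move=> E; congr hv; [ring | ring | rewrite (addrC c') E ].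
Qed.

Lemma hv_commg a b c a' b' c' :
  [~ hv a b c, hv a' b' c']%g = hv 0 0 (a * b' - a' * b).
Proof. rewrite /commg /conjg !hvV !hvM /hv /=; congr (_, _, _); ring. Qed.

Definition hx := hv 1 0 0.
Definition hy := hv 0 1 0.
Lemma hvX1 n : (hx ^+ n)%g = hv n%:R 0 0.
Proof.
elim: n => [|n IH]; first by [].
by rewrite expgS IH hvM mulrS ?mulr0 ?addr0.
Qed.
Lemma hvX2 n : (hy ^+ n)%g = hv 0 n%:R 0.
Proof.
elim: n => [|n IH]; first by [].
by rewrite expgS IH hvM mulrS ?mul0r ?addr0.
Qed.


Lemma ZpM0 : ((m.+2)%:R : R) = 0.
Proof. by rewrite Zp_nat; apply/val_inj => /=; rewrite modnn. Qed.

Definition Nset : {set heis} := [set h : heis | (h.1.1 == 0) && (h.1.2 == 0)].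
Lemma NP h : (h \in Nset) = (h.1.1 == 0) && (h.1.2 == 0).
Proof. by rewrite inE. Qed.
Lemma hvN c : hv 0 0 c \in Nset.
Proof. by rewrite NP /= !eqxx. Qed.

Lemma group_set_N : group_set Nset.
Proof.
apply/group_setP; split; first by rewrite NP /= eqxx.
move=> h k; rewrite !NP => /andP[/eqP a /eqP b] /andP[/eqP a' /eqP b'].
by rewrite (hv_eta h) (hv_eta k) hvM /= a b a' b' !addr0 !eqxx.
Qed.
Canonical Ngroup := Group group_set_N.

Lemma N_center : (Nset \subset 'Z([set: heis]))%g.
Proof.
apply/subsetP => h; rewrite NP => /andP[/eqP a0 /eqP b0]; apply/centerP; split.
  by rewrite inE.
move=> k _; rewrite (hv_eta h) (hv_eta k) a0 b0; apply/hv_comm.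
by rewrite mul0r mulr0.
Qed.

Lemma N_der : (Nset \subset [set: heis]^`(1))%g.
Proof.
apply/subsetP => h; rewrite NP => /andP[/eqP a0 /eqP b0].
have -> : h = ([~ hx, hv 0 h.2 0]%g).
  by rewrite /hx hv_commg (hv_eta h) a0 b0 /= mul1r mul0r subr0.
by rewrite derg1 mem_commg ?inE.
Qed.

Lemma nNH : ([set: heis] \subset 'N(Nset))%g.
Proof. exact: normal_norm (sub_center_normal N_center). Qed.

Definition hf := restrm nNH (coset Nset).
Definition Gq := (hf @* [set: heis])%G.

Lemma hfE h : hf h = coset Nset h.
Proof. by []. Qed.

Lemma ker_hf : ('ker hf)%g = Nset.
Proof. by rewrite ker_restrm ker_coset setTI. Qed.

Lemma hf_stem : stem_extension Gq hf.
Proof. by split; rewrite // ker_hf subsetI N_center N_der. Qed.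

Lemma hf_c a b c c' : hf (hv a b c) = hf (hv a b c').
Proof.
have -> : hv a b c = (hv a b c' * hv 0 0 (c - c'))%g.
  by rewrite hvM; congr hv; rewrite ?addr0 ?mulr0 //; ring.
by rewrite !hfE coset_kerr ?hvN.
Qed.

Lemma Gq_abelian : abelian Gq.
Proof.
apply/centsP => u /morphimP[h _ _ ->] v /morphimP[k _ _ ->].
rewrite /commute -!morphM ?inE // (commgC h k) morphM ?inE //.
rewrite mkerr; first by rewrite morphM ?inE.
  by rewrite inE.
by rewrite ker_hf (hv_eta h) (hv_eta k) hv_commg hvN.
Qed.

Section Stem.
Local Open Scope group_scope.
Variables (kT : finGroupType) (K : {group kT}) (g : {morphism K >-> coset_of Nset}).
Hypotheses (gK : g @* K = Gq) (kerZ : 'ker g \subset 'Z(K)).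
Variables (x y : kT).
Hypotheses (Kx : x \in K) (Ky : y \in K) (gx : g x = hf hx) (gy : g y = hf hy).
Let c := [~ y, x].

Lemma kerC z w : z \in 'ker g -> w \in K -> commute z w.
Proof. by move=> /(subsetP kerZ)/centerP[_ cz] /cz. Qed.

Lemma c_ker : c \in 'ker g.
Proof.
apply/kerP; first by rewrite groupR.
rewrite morphR // gx gy -morphR ?inE //.
by apply/mker; rewrite ker_hf /hx /hy hv_commg hvN.
Qed.

Lemma cx : commute x c.
Proof. exact/commute_sym/kerC/Kx/c_ker. Qed.
Lemma cy : commute y c.
Proof. exact/commute_sym/kerC/Ky/c_ker. Qed.

Lemma cM : c ^+ m.+2 = 1.
Proof.
rewrite /c -commgX; last exact: cx.
apply/eqP/commgP/commute_sym/kerC => //.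
apply/kerP; first by rewrite groupX.
by rewrite morphX // gx -morphX ?inE // hvX1 ZpM0; apply/mker; rewrite ker_hf hvN.
Qed.

Lemma decomp a (i j : nat) cc : a \in K -> g a = hf (hv i%:R j%:R cc) ->
  exists2 z, z \in 'ker g & a = x ^+ i * y ^+ j * z.
Proof.
move=> Ka ga; exists ((x ^+ i * y ^+ j)^-1 * a); last by rewrite mulKVg.
apply/kerP; first by rewrite groupM ?groupV ?groupM ?groupX.
rewrite morphM ?groupV ?groupM ?groupX // morphV ?groupM ?groupX //.
rewrite morphM ?groupX // !morphX // gx gy -!morphX ?inE // -morphM ?inE //.
rewrite hvX1 hvX2 hvM ga addr0 add0r.
change ((hf (hv i%:R j%:R (0 + 0 + i%:R * j%:R)%R))^-1 * hf (hv i%:R j%:R cc) = 1).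
by rewrite (hf_c _ _ _ cc) mulVg.
Qed.

Lemma prodF i j k l :
  (x ^+ i * y ^+ j) * (x ^+ k * y ^+ l) = x ^+ (i + k) * y ^+ (j + l) * c ^+ (j * k).
Proof.
have E : y ^+ j * x ^+ k = x ^+ k * y ^+ j * c ^+ (j * k).
  by rewrite commgC commXXg //; [exact: cy | exact: cx].
have cl : commute (c ^+ (j * k)) (y ^+ l) by apply/commuteX/commute_sym/commuteX/cy.
rewrite !mulgA -(mulgA _ (y ^+ j)) E !mulgA -expgD -!mulgA cl.
by rewrite !mulgA -(mulgA _ (y ^+ j)) -expgD.
Qed.


Lemma prodZ i j k l z z' : z \in 'ker g -> z' \in 'ker g ->
  exists P, (x ^+ i * y ^+ j * z) * (x ^+ k * y ^+ l * z') = P * c ^+ (j * k) /\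
            (x ^+ k * y ^+ l * z') * (x ^+ i * y ^+ j * z) = P * c ^+ (l * i).
Proof.
move=> kz kz'.
have Kz : z \in K by apply: dom_ker kz.
have Kz' : z' \in K by apply: dom_ker kz'.
have sw : forall a b w w' : kT, w \in 'ker g -> b \in K ->
    a * w * (b * w') = a * b * (w * w').
  by move=> a b w w' kw Kb; rewrite !mulgA -(mulgA a w b) (kerC kw Kb) !mulgA.
have cc : forall n, commute (c ^+ n) (z * z').
  by move=> n; apply/commute_sym/commuteX/commute_sym/kerC; [exact: c_ker | rewrite groupM].
exists (x ^+ (i + k) * y ^+ (j + l) * (z * z')); split.
  rewrite sw // ?groupM ?groupX // prodF -!mulgA.
  by rewrite [z * (z' * _)]mulgA (cc (j * k)%N).
rewrite sw // ?groupM ?groupX // prodF -!mulgA (addnC k) (addnC l).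
by rewrite (kerC kz' Kz) [z * (z' * _)]mulgA (cc (l * i)%N).
Qed.

Lemma commute_crit a b (i j k l : nat) cc cc' : a \in K -> b \in K ->
  g a = hf (hv i%:R j%:R cc) -> g b = hf (hv k%:R l%:R cc') ->
  (j * k = l * i %[mod m.+2])%N -> commute a b.
Proof.
move=> Ka Kb ga gb E.
have [z kz ->] := decomp Ka ga; have [z' kz' ->] := decomp Kb gb.
rewrite /commute; have [P [-> ->]] := prodZ i j k l kz kz'.
by rewrite -(expg_mod _ cM) E (expg_mod _ cM).
Qed.

Lemma commg_cycle a b : a \in K -> b \in K -> [~ a, b] \in <[c]>.
Proof.
have gform : forall w, w \in K -> exists (i j : nat) cc, g w = hf (hv i%:R j%:R cc).
  move=> w Kw; have : g w \in Gq by rewrite -gK mem_morphim.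
  case/morphimP=> h _ _ ->; exists (val h.1.1), (val h.1.2), h.2.
  by rewrite !natr_Zp -hv_eta.
move=> Ka Kb.
have [i [j [cc ga]]] := gform a Ka; have [k [l [cc' gb]]] := gform b Kb.
have [z kz ->] := decomp Ka ga; have [z' kz' ->] := decomp Kb gb.
have [P [E1 E2]] := prodZ i j k l kz kz'.
have -> : forall u v : kT, [~ u, v] = (v * u)^-1 * (u * v).
  by move=> u v; rewrite invMg /commg /conjg !mulgA.
rewrite E1 E2 invMg -mulgA (mulgA P^-1) mulVg mul1g.
by rewrite groupM ?groupV ?mem_cycle.
Qed.

Lemma ker_card : 'ker g \subset K^`(1) -> (#|'ker g| <= m.+2)%N.
Proof.
move=> kD.
have sD : K^`(1) \subset <[c]>.
  rewrite derg1 gen_subG; apply/subsetP => w /imset2P[a b Ka Kb ->].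
  exact: commg_cycle.
apply: leq_trans (subset_leq_card (subset_trans kD sD)) _.
by apply: dvdn_leq => //; rewrite order_dvdn cM.
Qed.

End Stem.
Local Open Scope group_scope.

Lemma card_split (kT rT : finGroupType) (K : {group kT}) (g : {morphism K >-> rT}) :
  #|K| = (#|'ker g| * #|g @* K|)%N.
Proof.
rewrite card_morphim setIid Lagrange //.
by apply/subsetP => z; apply: dom_ker.
Qed.

Lemma existsXY (kT : finGroupType) (K : {group kT}) (g : {morphism K >-> coset_of Nset}) :
  g @* K = Gq -> exists x y, [/\ x \in K, y \in K, g x = hf hx & g y = hf hy].
Proof.
move=> gK.
have : hf hx \in g @* K by rewrite gK mem_morphim ?inE.
case/morphimP=> x Kx _ gx.
have : hf hy \in g @* K by rewrite gK mem_morphim ?inE.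
case/morphimP=> y Ky _ gy.
by exists x, y; split.
Qed.

Lemma card_N : (m.+2 <= #|Nset|)%N.
Proof.
have -> : m.+2 = #|[set hv 0%R 0%R c | c : R]|.
  rewrite card_imset ?cardsT ?card_ord //.
  by move=> c c' /hv_inj[].
apply: subset_leq_card; apply/subsetP => h /imsetP[c _ ->]; exact: hvN.
Qed.

Lemma hf_schur : schur_cover Gq hf.
Proof.
split; first exact: hf_stem.
move=> kT K g [gK]; rewrite subsetI => /andP[kerZ kerD].
have [x [y [Kx Ky gx gy]]] := existsXY gK.
rewrite (card_split g) (card_split hf) gK ker_hf leq_mul2r.
apply/orP; right; apply: leq_trans card_N.
exact: (ker_card gK kerZ Kx Ky gx gy kerD).
Qed.

End Heis.

Lemma main_construct (V : finType) (e : rel V) (e_irr : irreflexive e) m (a b : V -> nat)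
  (He : forall u v, u != v -> (a u * b v == a v * b u %[mod m.+2]) = e u v)
  (Hi : forall u v, a u = a v %[mod m.+2] -> u = v) :
  exists (gT : finGroupType) (G : {group gT}), nilpotent G /\
    exists phi : V -> gT,
      [/\ injective phi, (forall v, phi v \in G) &
          forall u v, e u v <-> deep_adj G (phi u) (phi v)].
Proof.
pose phi v := @hf m (hv (a v)%:R (b v)%:R 0)%R.
have natE : forall p q, ((p%:R : 'Z_(m.+2)) = q%:R)%R <-> (p = q %[mod m.+2]).
  move=> p q; rewrite !Zp_nat; split; first by move/(congr1 val).
  by move=> E; apply/val_inj; rewrite /= E.
have phi_inj : injective phi.
  move=> u v E; apply: Hi; apply/natE.
  have [z] := ker_rcoset (in_setT (hv (a u)%:R%R (b u)%:R%R 0%R : heis m)) (in_setT (hv (a v)%:R%R (b v)%:R%R 0%R : heis m)) E.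
  rewrite ker_hf NP => /andP[/eqP z1 _]; rewrite (hv_eta z) z1 hvM => /hv_inj[+ _ _].
  by rewrite add0r.
exists (coset_of (Nset m)), (Gq m); split.
  exact/abelian_nil/Gq_abelian.
exists phi; split => //.
  by move=> v; rewrite mem_morphim ?inE.
move=> u v; split.
  move=> euv.
  have nuv : u != v by apply: contraTneq euv => ->; rewrite e_irr.
  split; rewrite ?mem_morphim ?inE //; first by apply: contra nuv => /eqP/phi_inj ->.
  move=> hT H f [[fH kerZD] _] p q Hp Hq fp fq.
  move: kerZD; rewrite subsetI => /andP[kerZ _].
  have [x [y [Kx Ky gx gy]]] := existsXY fH.
  apply: (commute_crit kerZ Kx Ky gx gy Hp Hq fp fq).
  move: (He u v nuv); rewrite euv => /eqP.
  by move=> E; rewrite [(b u * _)%N]mulnC [(b v * _)%N]mulnC E.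
case=> _ _ npq /(_ _ _ _ (hf_schur m)).
move=> /(_ (hv (a u)%:R (b u)%:R 0)%R (hv (a v)%:R (b v)%:R 0)%R).
rewrite !inE => /(_ isT isT erefl erefl) /hv_comm.
have nuv : u != v by apply: contra npq => /eqP ->.
rewrite -!natrM => /natE /eqP; rewrite He //.
Qed.

Theorem theorem3p5 (V : finType) (e : rel V)
    (e_sym : symmetric e) (e_irr : irreflexive e) :
  exists (gT : finGroupType) (G : {group gT}), nilpotent G /\
    exists phi : V -> gT,
      [/\ injective phi, (forall v, phi v \in G) &
          forall u v, e u v <-> deep_adj G (phi u) (phi v)].
Proof.
have gt1 := MM_gt1 V.
have Em : ((MM V).-2).+2 = MM V.
  by case: (MM V) gt1 => [|[|n]].
apply: (@main_construct V e e_irr (MM V).-2 (va e) (vb e)).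
  by move=> u v nuv; rewrite Em; exact: nHe.
by move=> u v; rewrite Em; exact: nHi.
Qed.
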